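(* Let $R=\mathcal{C}'/[(1+\delta_a)^2(1+r/\log M)]$ with $r>r_1$, where $$r_0=\frac{1}{2(1+\delta_a)^2},\qquad r_1=\frac{r_0}{2}+\frac{\sqrt{\log M}}{\sqrt{\pi}\,(1+\delta_a)}.$$ Let $x_r$ be defined by $1-x_r=\frac{1}{snr}\cdot\frac{r}{\log M}$ (equivalently, $x_r$ is the value of $x$ with $z_x=0$). Then for all $0\le x\le x_r$ (with $x\in[0,1]$), $$g_{low}(x)-x\ \ge\ gap:=\frac{1}{snr}\cdot\frac{r-r_1}{\log M}.$$
   Context: Fix an integer $M\ge2$, $snr>0$, $\nu=snr/(1+snr)$, constants $a\ge0$, $\mathcal{C}'>0$, and $\delta_a=a/\sqrt{2\log M}$ (natural logarithm). $\Phi,\phi$ denote the standard normal distribution function and density. For $x\in[0,1]$, $u>0$: $\mu(x,u)=\big(\sqrt{u/(1-x\nu)}-1\big)\sqrt{2\log M}-a$, $u_x=1-x\nu$, $z_x=\mu(x,(1-\nu)\mathcal{C}'/R)$, and $$g_{low}(x)=\Phi(z_x)+\frac1\nu\int_{z_x}^\infty\Big[1-\frac{R}{\mathcal{C}'}u_x\Big(1+\frac{z+a}{\sqrt{2\log M}}\Big)^2\Big]\phi(z)\,dz .$$ (This $g_{low}$ is a lower bound for $g(x)=\frac1\nu\int_{1-\nu}^1\Phi(\mu(x,u\,\mathcal{C}'/R))\,du$.) *)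

(* Defs.v *)
From Stdlib Require Import Reals Lra.
Open Scope R_scope.

Definition phi (z : R) : R := exp (- (z * z) / 2) / sqrt (2 * PI).

Definition has_integral_from (f : R -> R) (a l : R) : Prop :=
  (forall b, a <= b -> exists pr : Riemann_integrable f a b, True) /\
  (forall eps, 0 < eps -> exists B, forall b (pr : Riemann_integrable f a b),
      B <= b -> Rabs (RiemannInt pr - l) < eps).

Definition has_integral_upto (f : R -> R) (a l : R) : Prop :=
  (forall b, b <= a -> exists pr : Riemann_integrable f b a, True) /\
  (forall eps, 0 < eps -> exists B, forall b (pr : Riemann_integrable f b a),
      b <= B -> Rabs (RiemannInt pr - l) < eps).

Definition is_Phi (z p : R) : Prop := has_integral_upto phi z p.

(* All parameters explicit: M snr a C' (and the rate R, called Rate). *)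
Definition logM (M : nat) : R := ln (INR M).
Definition nu (snr : R) : R := snr / (1 + snr).
Definition delta_a (M : nat) (a : R) : R := a / sqrt (2 * logM M).
Definition mu (M : nat) (snr a : R) (x u : R) : R :=
  (sqrt (u / (1 - x * nu snr)) - 1) * sqrt (2 * logM M) - a.
Definition u_x (snr x : R) : R := 1 - x * nu snr.
Definition z_x (M : nat) (snr a C' Rate x : R) : R :=
  mu M snr a x ((1 - nu snr) * C' / Rate).
(* integrand of the second term of g_low *)
Definition glow_integrand (M : nat) (snr a C' Rate x : R) (z : R) : R :=
  (1 - Rate / C' * u_x snr x * Rsqr (1 + (z + a) / sqrt (2 * logM M))) * phi z.
Definition r0 (M : nat) (a : R) : R := 1 / (2 * Rsqr (1 + delta_a M a)).
Definition r1 (M : nat) (a : R) : R :=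
  r0 M a / 2 + sqrt (logM M) / (sqrt PI * (1 + delta_a M a)).
Definition rate_of (M : nat) (a C' r : R) : R :=
  C' / (Rsqr (1 + delta_a M a) * (1 + r / logM M)).
Definition x_r (M : nat) (snr r : R) : R := 1 - (1 / snr) * (r / logM M).
Definition gap (M : nat) (snr a r : R) : R := (1 / snr) * ((r - r1 M a) / logM M).

(* Main.v *)
Require Import Defs.
From Stdlib Require Import Reals Lra.
From Coquelicot Require Import Coquelicot.
Open Scope R_scope.

Definition gs (t : R) : R := exp (- (t * t)).
Definition Fg (y : R) : R := RInt gs 0 y.

Lemma gs_cont y : continuous gs y.
Proof. apply (ex_derive_continuous (K:=R_AbsRing) (V:=R_NormedModule)). unfold gs. auto_derive. auto. Qed.

Lemma Fg_deriv y : derivable_pt_lim Fg y (gs y).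
Proof.
apply is_derive_Reals. apply (is_derive_RInt gs Fg 0 y).
- apply filter_forall. intros b. unfold Fg. apply (RInt_correct (V:=R_CompleteNormedModule)). apply (ex_RInt_continuous (V:=R_CompleteNormedModule)).
  intros; apply gs_cont.
- apply gs_cont.
Qed.

Definition dq (f : R -> R) (x l h : R) : R :=
  if Req_EM_T h 0 then l else (f (x + h) - f x) / h.

Lemma dq_cont f x l : derivable_pt_lim f x l -> continuity_pt (dq f x l) 0.
Proof.
intros H eps Heps. destruct (H eps Heps) as [d Hd].
exists d. split. apply cond_pos.
intros h [[_ Hh0] Hhd]. unfold dq, dist; simpl; unfold R_dist.
destruct (Req_EM_T h 0) as [E|E]; [congruence|].
destruct (Req_EM_T 0 0) as [_|E']; [|congruence].
apply Hd. auto. change (Rabs (h - 0) < d) in Hhd. rewrite Rminus_0_r in Hhd. exact Hhd.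
Qed.

Lemma dq_0 f x l : dq f x l 0 = l.
Proof. unfold dq. destruct (Req_EM_T 0 0); [reflexivity|congruence]. Qed.

Lemma dq_neq f x l h : h <> 0 -> dq f x l h = (f (x + h) - f x) / h.
Proof. intros H. unfold dq. destruct (Req_EM_T h 0); [congruence|reflexivity]. Qed.

Lemma Fg_0 : Fg 0 = 0.
Proof. unfold Fg. apply (RInt_point (V:=R_CompleteNormedModule)). Qed.

Lemma Fg_cont y : continuity_pt Fg y.
Proof. apply derivable_continuous_pt. exists (gs y). apply Fg_deriv. Qed.

Module MC.
From HB Require Import structures.
From mathcomp Require Import all_boot all_order all_algebra.
From mathcomp Require Import all_classical all_reals all_analysis.
From mathcomp Require Import Rstruct Rstruct_topology.
Import Order.TTheory GRing.Theory Num.Theory.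
Import numFieldNormedType.Exports.
Local Open Scope classical_set_scope.
Local Open Scope ring_scope.

Lemma RcosE (x : R) : Rtrigo_def.cos x = trigo.cos x.
Proof.
rewrite /Rtrigo_def.cos; case: exist_cos => y; rewrite /cos_in /infinite_sum => cos_ub.
have h1 := @cvg_cos_coeff' R x.
suff h2 : series (cos_coeff' x) @ \oo --> y.
  exact: (cvg_unique _ h2 h1).
rewrite -cvg_shiftS /=; apply/(@cvgrPdist_lt _ R^o) => /= e /RltP /cos_ub[N NH].
near=> n.
have nN : (n >= N)%coq_nat by apply/ssrnat.leP; near: n; exact: nbhs_infty_ge.
move: NH => /(_ _ nN) /[!RdistE] /RltP /=.
rewrite distrC sum_f_R0E; congr (`| _ - _ | < e).
apply: eq_bigr => k _; rewrite /cos_coeff' /cos_n RdivE RpowE INRE factE.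
rewrite RpowE /Rsqr -exprnP !RmultE -expr2 -exprM.
have -> : (2 * k)%coq_nat = k.*2 by rewrite -mul2n.
by rewrite mul2n mulrAC.
Unshelve. all: by end_near. Qed.

Lemma R2E : (2%R : R) = IZR 2.
Proof. rewrite (_ : (2%R:R) = 1%R + 1%R)// RplusE -R1E /IZR /=; lra. Qed.

Lemma RpiE : PI = pi.
Proof.
have hP : (0 < PI <= 4)%coqR by split; [exact: PI_RGT_0 | exact: PI_4].
have e1 : Rle 0 (PI/2) by destruct hP; lra.
have e2 : Rle (PI/2) 2 by destruct hP; lra.
have h1 : (0 <= (PI / 2)%coqR) && ((PI / 2)%coqR <= 2).
  by apply/andP; split; apply/RleP; [exact: e1 | rewrite R2E; exact: e2].
have h2 : trigo.cos (PI / 2)%coqR = 0.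
  by rewrite -RcosE cos_PI2.
have [h3 h4] := @pihalf_02_cos_pihalf R.
have := cos_02_uniq h1 h2 h3 h4.
rewrite RdivE R2E; move=> h5.
have := congr1 (fun t => t * 2%R) h5; rewrite -R2E /=.
by rewrite !divfK // pnatr_eq0.
Qed.

Lemma dq_cvg (f : R^o -> R^o) (x l : R^o) : derivable_pt_lim f x l ->
  (fun h : R^o => h^-1 *: (f (h *: 1 + x) - f x)) @ 0^' --> l.
Proof.
move=> H; have := (continuity_pt_cvg' _ _).1 (dq_cont _ _ _ H).
rewrite dq_0.
move=> hc; apply: (cvg_trans _ hc); apply: near_eq_cvg.
near=> h.
have hn0 : h != 0 by near: h; exact: nbhs_dnbhs_neq.
rewrite dq_neq; last by move=> E; move: hn0; rewrite E eqxx.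
rewrite RdivE /= -[h%:A]/(h * 1) mulr1 -[_ *: _]/(_ * _) RminusE RplusE mulrC [h + x]addrC.
by [].
Unshelve. all: by end_near. Qed.

Lemma dpl_derivable (f : R^o -> R^o) (x l : R^o) : derivable_pt_lim f x l -> derivable f x 1 /\ derive1 f x = l.
Proof.
move=> H; split; first by apply/cvg_ex; exists l; exact: (dq_cvg _ _ _ H).
by rewrite derive1E; apply: cvg_lim => //; exact: (dq_cvg _ _ _ H).
Qed.

Lemma gs_gauss t : gs t = gauss_fun t.
Proof. by rewrite /gs /gauss_fun RexpE expr2 RoppE RmultE. Qed.

Lemma integral0_Fg (y : R) : (0 < y)%R -> gauss_integral_proof.integral0_gauss y = Fg y.
Proof.
move=> y0; rewrite /gauss_integral_proof.integral0_gauss /Rintegral.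
have dF : forall t, derivable (Fg : R^o -> R^o) t 1 /\ derive1 (Fg : R^o -> R^o) t = gauss_fun t.
  by move=> t; rewrite -gs_gauss; apply: dpl_derivable; exact: Fg_deriv.
rewrite (@continuous_FTC2 R gauss_fun Fg 0 y y0).
- by rewrite -EFinB /= Fg_0 subr0.
- by apply: continuous_subspaceT => t; exact: continuous_gauss_fun.
- split.
  + by move=> t _; exact: (dF t).1.
  + by apply: cvg_at_right_filter; exact/continuity_pt_cvg/Fg_cont.
  + by apply: cvg_at_left_filter; exact/continuity_pt_cvg/Fg_cont.
- by move=> t _; exact: (dF t).2.
Qed.

Lemma Fg_cvg : Fg x @[x --> +oo] --> Num.sqrt pi / 2.
Proof.
have cvg_Ig : @gauss_integral_proof.integral0_gauss R x @[x --> +oo] --> Num.sqrt pi / 2.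
  have : Num.sqrt (@gauss_integral_proof.integral0_gauss R x ^+ 2) @[x --> +oo]
      --> Num.sqrt (pi / 4).
    apply: continuous_cvg => //;
      [exact: sqrt_continuous|exact: gauss_integral_proof.cvg_integral0_gauss_sqr].
  rewrite sqrtrM ?pi_ge0// sqrtrV// (_ : 4 = 2 ^+ 2); last first.
    by rewrite expr2 -natrM.
  rewrite sqrtr_sqr ger0_norm//.
  rewrite (_ : (fun _ => Num.sqrt _) = gauss_integral_proof.integral0_gauss)//.
  apply/funext => r; rewrite sqrtr_sqr// ger0_norm//.
  exact: gauss_integral_proof.integral0_gauss_ge0.
apply: (cvg_trans _ cvg_Ig); apply: near_eq_cvg.
near=> x; rewrite integral0_Fg //.
Unshelve. all: by end_near. Qed.

Lemma gauss_lim eps : (0 < eps)%coqR -> exists B, forall y, (B <= y)%coqR ->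
  (Rabs (Fg y - sqrt PI / 2) < eps)%coqR.
Proof.
move=> /RltP e0.
have := Fg_cvg; move/(@cvgrPdist_lt _ R^o) => /(_ eps e0) [M [Mr HM]].
exists (M + 1)%coqR => y /RleP yM; apply/RltP.
have My : M < y by apply: (lt_le_trans _ yM); rewrite RplusE ltrDl.
have := HM y My.
by rewrite RabsE RminusE RdivE RsqrtE RpiE R2E distrC.
Qed.

End MC.

Lemma phi_cont y : continuous phi y.
Proof. apply (ex_derive_continuous (K:=R_AbsRing) (V:=R_NormedModule)). unfold phi. auto_derive. auto. Qed.

Lemma phi_exRInt a b : ex_RInt phi a b.
Proof. apply (ex_RInt_continuous (V:=R_CompleteNormedModule)). intros; apply phi_cont. Qed.

Lemma sqrt2PI : sqrt (2 * PI) = sqrt 2 * sqrt PI.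
Proof. apply sqrt_mult; generalize PI_RGT_0; lra. Qed.

Lemma phi_gs t : phi t = / sqrt PI * (/ sqrt 2 * gs (/ sqrt 2 * t + 0)).
Proof.
unfold phi, gs. rewrite sqrt2PI.
assert (h2 : 0 < sqrt 2) by (apply sqrt_lt_R0; lra).
assert (hP : 0 < sqrt PI) by (apply sqrt_lt_R0; generalize PI_RGT_0; lra).
replace (- (t * t) / 2) with (- ((/ sqrt 2 * t + 0) * (/ sqrt 2 * t + 0))).
- field. split; lra.
- assert (sqrt 2 * sqrt 2 = 2) by (apply sqrt_sqrt; lra). field_simplify. replace (sqrt 2 ^ 2) with 2 by (simpl; lra). reflexivity.
  lra.
Qed.

Lemma RInt_phi_Fg y : RInt phi 0 y = / sqrt PI * Fg (/ sqrt 2 * y).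
Proof.
rewrite (RInt_ext phi (fun t => / sqrt PI * (/ sqrt 2 * gs (/ sqrt 2 * t + 0)))).
2:{ intros; apply phi_gs. }
assert (Hc := RInt_comp_lin (V:=R_CompleteNormedModule) gs (/ sqrt 2) 0 0 y).
assert (Hs := RInt_scal (V:=R_CompleteNormedModule) (fun t => scal (/ sqrt 2) (gs (/ sqrt 2 * t + 0))) 0 y (/ sqrt PI)).
assert (E1 : ex_RInt gs (/ sqrt 2 * 0 + 0) (/ sqrt 2 * y + 0)).
{ apply (ex_RInt_continuous (V:=R_CompleteNormedModule)). intros; apply gs_cont. }
assert (E2 : ex_RInt (fun t : R => scal (/ sqrt 2) (gs (/ sqrt 2 * t + 0))) 0 y).
{ apply (ex_RInt_continuous (V:=R_CompleteNormedModule)). intros.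
  apply (ex_derive_continuous (K:=R_AbsRing) (V:=R_NormedModule)). unfold gs, scal; simpl. unfold mult; simpl. auto_derive. auto. }
transitivity (scal (/ sqrt PI) (RInt (fun t => scal (/ sqrt 2) (gs (/ sqrt 2 * t + 0))) 0 y)).
{ exact (Hs E2). }
transitivity (scal (/ sqrt PI) (RInt gs (/ sqrt 2 * 0 + 0) (/ sqrt 2 * y + 0))).
{ apply (f_equal (scal (/ sqrt PI))). exact (Hc E1). }
unfold Fg.
replace (/ sqrt 2 * 0 + 0) with 0 by ring. replace (/ sqrt 2 * y + 0) with (/ sqrt 2 * y) by ring.
reflexivity.
Qed.


Lemma sqrt2_pos : 0 < sqrt 2.
Proof. apply sqrt_lt_R0; lra. Qed.
Lemma sqrtPI_pos : 0 < sqrt PI.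
Proof. apply sqrt_lt_R0; generalize PI_RGT_0; lra. Qed.

Lemma phi_half eps : 0 < eps -> exists B, forall y, B <= y -> Rabs (RInt phi 0 y - 1/2) < eps.
Proof.
intros He. assert (hP := sqrtPI_pos). assert (h2 := sqrt2_pos).
destruct (MC.gauss_lim (eps * sqrt PI)) as [B HB]. { apply Rmult_lt_0_compat; lra. }
exists (sqrt 2 * B). intros y Hy.
rewrite RInt_phi_Fg.
replace (/ sqrt PI * Fg (/ sqrt 2 * y) - 1 / 2) with (/ sqrt PI * (Fg (/ sqrt 2 * y) - sqrt PI / 2)) by (field; lra).
rewrite Rabs_mult, Rabs_right by (left; apply Rinv_0_lt_compat; lra).
apply (Rmult_lt_reg_l (sqrt PI)); [lra|].
rewrite <- Rmult_assoc, Rinv_r by lra. rewrite Rmult_1_l.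
replace (sqrt PI * eps) with (eps * sqrt PI) by ring.
apply HB.
apply (Rmult_le_reg_l (sqrt 2)); [lra|].
rewrite <- Rmult_assoc, Rinv_r by lra. lra.
Qed.

Lemma phi_even t : phi (- t) = phi t.
Proof. unfold phi. replace (- t * - t) with (t * t) by ring. reflexivity. Qed.

Lemma RInt_phi_sym b : RInt phi b 0 = RInt phi 0 (- b).
Proof.
assert (Hc := RInt_comp_lin (V:=R_CompleteNormedModule) phi (-1) 0 0 b).
replace (-1 * 0 + 0) with 0 in Hc by ring. replace (-1 * b + 0) with (- b) in Hc by ring.
rewrite <- (Hc (phi_exRInt _ _)).
transitivity (RInt (fun y => opp (phi y)) 0 b).
- rewrite (RInt_opp (V:=R_CompleteNormedModule)) by apply phi_exRInt.
  rewrite (opp_RInt_swap (V:=R_CompleteNormedModule)) by apply phi_exRInt. reflexivity.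
- apply RInt_ext. intros x _. replace (-1 * x + 0) with (- x) by ring. rewrite phi_even.
  unfold scal, opp; simpl. unfold mult; simpl. ring.
Qed.

Lemma eq_eps x y K : (forall eps, 0 < eps -> Rabs (x - y) <= K * eps) -> x = y.
Proof.
intros H. destruct (Req_dec (x - y) 0) as [E|E]; [lra|].
assert (Hd : 0 < Rabs (x - y)) by (apply Rabs_pos_lt; auto).
destruct (Rle_lt_dec K 0) as [HK|HK].
- specialize (H 1 Rlt_0_1). nra.
- specialize (H (Rabs (x - y) / (2 * K))).
  assert (0 < Rabs (x - y) / (2 * K)) by (apply Rdiv_lt_0_compat; lra).
  specialize (H H0). replace (K * (Rabs (x - y) / (2 * K))) with (Rabs (x - y) / 2) in H by (field; lra).
  lra.
Qed.

Lemma ex_RInt_phi_Chasles a b c : RInt phi a b + RInt phi b c = RInt phi a c.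
Proof. apply (RInt_Chasles (V:=R_CompleteNormedModule)); apply phi_exRInt. Qed.

Lemma Phi_val z p : is_Phi z p -> p = 1/2 + RInt phi 0 z.
Proof.
intros [Hex Hlim]. apply (eq_eps _ _ 2). intros eps He.
destruct (Hlim eps He) as [B1 HB1].
destruct (phi_half eps He) as [B2 HB2].
set (b := Rmin B1 (Rmin (- B2) z)).
assert (Hb1 : b <= B1) by (unfold b; apply Rmin_l).
assert (Hb2 : b <= - B2) by (unfold b; eapply Rle_trans; [apply Rmin_r|apply Rmin_l]).
assert (Hb3 : b <= z) by (unfold b; eapply Rle_trans; [apply Rmin_r|apply Rmin_r]).
destruct (Hex b Hb3) as [pr _].
specialize (HB1 b pr Hb1). rewrite <- RInt_Reals in HB1.
rewrite <- ex_RInt_phi_Chasles with (b := 0) in HB1.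
rewrite RInt_phi_sym in HB1.
specialize (HB2 (- b) ltac:(lra)).
apply Rabs_def2 in HB1. apply Rabs_def2 in HB2.
apply Rabs_le. lra.
Qed.

Lemma sqrt2PI_pos : 0 < sqrt (2 * PI).
Proof. apply sqrt_lt_R0; generalize PI_RGT_0; lra. Qed.

Section Integ.
Variables (c s a : R).
Hypothesis hs : 0 < s.
Let fI t := (1 - c * Rsqr (1 + (t + a) / s)) * phi t.
Let b0 := s + a.
Let k := c / (s * s).
Let K := k * (1 + b0 * b0).
Let G t := k * (t + 2 * b0) * phi t.
Let gI t := fI t - (1 - K) * phi t.

Lemma G_deriv t : is_derive G t (gI t).
Proof.
unfold G, gI, fI, K, k, b0, phi, Rsqr. assert (H1 := sqrt2PI_pos).
auto_derive. auto. change (- (t * t) * / 2) with (- (t * t) / 2). field. split; lra.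
Qed.

Lemma gI_cont t : continuous gI t.
Proof.
apply (ex_derive_continuous (K:=R_AbsRing) (V:=R_NormedModule)).
unfold gI, fI, K, k, b0, phi, Rsqr. auto_derive. assert (H1 := sqrt2PI_pos). repeat split; lra.
Qed.

Lemma RInt_gI z B : RInt gI z B = G B - G z.
Proof.
apply is_RInt_unique. apply (is_RInt_derive (V:=R_CompleteNormedModule)).
- intros; apply G_deriv.
- intros; apply gI_cont.
Qed.

Lemma gI_ex z B : ex_RInt gI z B.
Proof. apply (ex_RInt_continuous (V:=R_CompleteNormedModule)). intros; apply gI_cont. Qed.

Lemma RInt_fI z B : RInt fI z B = (1 - K) * RInt phi z B + (G B - G z).
Proof.
rewrite <- RInt_gI.
transitivity (RInt (fun t => plus (gI t) (scal (1 - K) (phi t))) z B).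
- apply RInt_ext. intros x _. unfold gI, plus, scal; simpl. unfold mult; simpl. ring.
- rewrite (RInt_plus (V:=R_CompleteNormedModule)).
  + rewrite (RInt_scal (V:=R_CompleteNormedModule)) by apply phi_exRInt.
    unfold plus, scal; simpl. unfold mult; simpl. ring.
  + apply gI_ex.
  + apply (ex_RInt_scal (V:=R_CompleteNormedModule)). apply phi_exRInt.
Qed.

End Integ.

Lemma phi_le B : 0 < B -> phi B <= 2 / (B * B).
Proof.
intros HB. unfold phi.
assert (Hs : 1 <= sqrt (2 * PI)).
{ rewrite <- sqrt_1. apply sqrt_le_1_alt. generalize PI_RGT_0; generalize PI2_3_2; lra. }
assert (HBB : 0 < B * B / 2) by nra.
assert (He := exp_ineq1 (B * B / 2) ltac:(lra)).
replace (- (B * B) / 2) with (- (B * B / 2)) by field.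
rewrite exp_Ropp.
assert (Hep : 0 < exp (B * B / 2)) by apply exp_pos.
apply (Rle_trans _ (/ exp (B * B / 2))).
- unfold Rdiv. rewrite <- (Rmult_1_r (/ exp (B * B / 2))) at 2.
  apply Rmult_le_compat_l; [left; apply Rinv_0_lt_compat; lra|].
  rewrite <- Rinv_1. apply Rinv_le_contravar; lra.
- replace (2 / (B * B)) with (/ (B * B / 2)) by (field; lra).
  apply Rinv_le_contravar; lra.
Qed.

Lemma phi_pos t : 0 < phi t.
Proof. unfold phi. apply Rdiv_lt_0_compat. apply exp_pos. apply sqrt2PI_pos. Qed.

Lemma G_lim (k b0 : R) eps : 0 < eps -> exists B1, forall B, B1 <= B ->
  Rabs (k * (B + 2 * b0) * phi B) < eps.
Proof.
intros He.
set (C := 2 * Rabs k + 4 * Rabs (k * b0)).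
assert (HC : 0 <= C) by (unfold C; generalize (Rabs_pos k) (Rabs_pos (k * b0)); lra).
exists (1 + C / eps). intros B HB.
assert (HCe : 0 <= C / eps) by (apply Rdiv_le_0_compat; lra).
assert (HB1 : 1 <= B) by lra.
assert (Hp := phi_le B ltac:(lra)). assert (Hp0 := phi_pos B).
assert (Hb : B * phi B <= 2 / B).
{ apply (Rmult_le_reg_l B); [lra|]. replace (B * (2 / B)) with (B * B * (2 / (B * B))) by (field; lra).
  rewrite <- Rmult_assoc. apply Rmult_le_compat_l; nra. }
assert (Hb2 : phi B <= 2 / B).
{ apply (Rle_trans _ (2 / (B * B))); auto. apply Rmult_le_compat_l; [lra|].
  apply Rinv_le_contravar; nra. }
replace (k * (B + 2 * b0) * phi B) with (k * (B * phi B) + 2 * (k * b0) * phi B) by ring.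
eapply Rle_lt_trans. apply Rabs_triang.
rewrite !Rabs_mult. rewrite (Rabs_right B) by lra.
rewrite (Rabs_right (phi B)) by lra. rewrite (Rabs_right 2) by lra.
assert (Hk : 0 <= Rabs k) by apply Rabs_pos. assert (Hk2 : 0 <= Rabs b0) by apply Rabs_pos.
assert (HCB : C / B < eps).
{ apply (Rmult_lt_reg_r B); [lra|]. unfold Rdiv. rewrite Rmult_assoc, Rinv_l by lra.
  rewrite Rmult_1_r.
  assert (C / eps < B) by lra.
  apply (Rmult_lt_reg_r (/ eps)). apply Rinv_0_lt_compat; lra.
  replace (eps * B * / eps) with B by (field; lra). exact H. }
assert (E : C / B = Rabs k * (2 / B) + 2 * (Rabs k * Rabs b0) * (2 / B)).
{ unfold C. rewrite Rabs_mult. field. lra. }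
assert (Rabs k * (B * phi B) <= Rabs k * (2 / B)) by (apply Rmult_le_compat_l; lra).
assert (2 * (Rabs k * Rabs b0) * phi B <= 2 * (Rabs k * Rabs b0) * (2 / B)) by (apply Rmult_le_compat_l; nra).
lra.
Qed.

Lemma I_val c s a z I : 0 < s ->
  has_integral_from (fun t => (1 - c * Rsqr (1 + (t + a) / s)) * phi t) z I ->
  I = (1 - c / (s * s) * (1 + (s + a) * (s + a))) * (1 / 2 - RInt phi 0 z)
      - c / (s * s) * (z + 2 * (s + a)) * phi z.
Proof.
intros hs [Hex Hlim].
set (K1 := 1 - c / (s * s) * (1 + (s + a) * (s + a))).
apply (eq_eps _ _ (2 + Rabs K1)). intros eps He.
destruct (Hlim eps He) as [B1 HB1].
destruct (phi_half eps He) as [B2 HB2].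
destruct (G_lim (c / (s * s)) (s + a) eps He) as [B3 HB3].
set (B := Rmax B1 (Rmax B2 (Rmax B3 z))).
assert (Hb1 : B1 <= B) by (unfold B; apply Rmax_l).
assert (Hb2 : B2 <= B) by (unfold B; eapply Rle_trans; [|apply Rmax_r]; apply Rmax_l).
assert (Hb3 : B3 <= B) by (unfold B; eapply Rle_trans; [|apply Rmax_r]; eapply Rle_trans; [|apply Rmax_r]; apply Rmax_l).
assert (Hb4 : z <= B) by (unfold B; eapply Rle_trans; [|apply Rmax_r]; eapply Rle_trans; [|apply Rmax_r]; apply Rmax_r).
destruct (Hex B Hb4) as [pr _].
specialize (HB1 B pr Hb1). rewrite <- RInt_Reals in HB1.
rewrite (RInt_fI c s a hs) in HB1. fold K1 in HB1.
specialize (HB2 B Hb2). specialize (HB3 B Hb3).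
rewrite <- (ex_RInt_phi_Chasles 0 z B) in HB2.
set (P := RInt phi 0 z) in *. set (Q := RInt phi z B) in *.
set (GB := c / (s * s) * (B + 2 * (s + a)) * phi B) in *.
set (Gz := c / (s * s) * (z + 2 * (s + a)) * phi z) in *.
replace (I - (K1 * (1 / 2 - P) - Gz)) with ((I - (K1 * Q + (GB - Gz))) + K1 * (P + Q - 1/2) + GB) by ring.
eapply Rle_trans. apply Rabs_triang.
eapply Rle_trans. apply Rplus_le_compat_r. apply Rabs_triang.
rewrite Rabs_mult.
assert (0 <= Rabs K1) by apply Rabs_pos.
assert (Rabs (I - (K1 * Q + (GB - Gz))) <= eps) by (rewrite Rabs_minus_sym; lra).
assert (Rabs K1 * Rabs (P + Q - 1 / 2) <= Rabs K1 * eps) by (apply Rmult_le_compat_l; lra).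
lra.
Qed.

Lemma Phi0_deriv y : is_derive (fun t => RInt phi 0 t) y (phi y).
Proof.
apply (is_derive_RInt (V:=R_CompleteNormedModule) phi (fun t => RInt phi 0 t) 0 y).
- apply filter_forall. intros b. apply (RInt_correct (V:=R_CompleteNormedModule)). apply phi_exRInt.
- apply phi_cont.
Qed.

Lemma Phi0_cont y : continuous (fun t => RInt phi 0 t) y.
Proof.
apply (ex_derive_continuous (K:=R_AbsRing) (V:=R_NormedModule)). exists (phi y). apply Phi0_deriv.
Qed.

Lemma RInt_phi_nonneg a b : a <= b -> 0 <= RInt phi a b.
Proof. intros. apply RInt_ge_0; auto. apply phi_exRInt. intros; left; apply phi_pos. Qed.

Lemma RInt_phi_le_half w : 0 <= w -> RInt phi 0 w <= 1/2.
Proof.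
intros Hw. destruct (Rle_lt_dec (RInt phi 0 w) (1/2)) as [|Hlt]; auto.
exfalso. set (e := RInt phi 0 w - 1/2).
destruct (phi_half e ltac:(unfold e; lra)) as [B HB].
set (W := Rmax B w).
specialize (HB W (Rmax_l _ _)).
assert (Hm : 0 <= RInt phi w W) by (apply RInt_phi_nonneg; apply Rmax_r).
rewrite <- (ex_RInt_phi_Chasles 0 w W) in HB.
apply Rabs_def2 in HB. unfold e in HB. lra.
Qed.

Lemma Phi_nonneg y : y <= 0 -> 0 <= 1/2 + RInt phi 0 y.
Proof.
intros Hy.
assert (E : RInt phi 0 y = - RInt phi y 0).
{ rewrite <- (opp_RInt_swap (V:=R_CompleteNormedModule)) by apply phi_exRInt. reflexivity. }
rewrite E, RInt_phi_sym. assert (H := RInt_phi_le_half (- y) ltac:(lra)). lra.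
Qed.

Section Hmono.
Variable b0 : R.
Let Phi t := 1/2 + RInt phi 0 t.
Let hh t := 1 - Phi t + t * t * Phi t + 2 * t * b0 * Phi t + t * phi t + 2 * b0 * phi t.
Let hd t := 2 * (t + b0) * Phi t.

Lemma hh_deriv t : is_derive hh t (hd t).
Proof.
assert (D1 : is_derive (fun t => 1 + t * phi t + 2 * b0 * phi t) t (t * (- t * phi t) + phi t + 2 * b0 * (- t * phi t))).
{ unfold phi. assert (H1 := sqrt2PI_pos). auto_derive. auto.
  change (- (t * t) * / 2) with (- (t * t) / 2). field. lra. }
assert (D2 : is_derive (fun t => t * t + 2 * t * b0 - 1) t (2 * t + 2 * b0)).
{ auto_derive. auto. ring. }
assert (D3 : is_derive Phi t (phi t)).
{ unfold Phi. replace (phi t) with (plus zero (phi t)) by (unfold plus, zero; simpl; ring).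
  apply (is_derive_plus (K:=R_AbsRing) (V:=R_NormedModule) (fun _ => 1/2) (fun t => RInt phi 0 t)).
  apply (is_derive_const (K:=R_AbsRing) (V:=R_NormedModule)). apply Phi0_deriv. }
assert (D4 := is_derive_mult (K:=R_AbsRing) _ _ t _ _ D2 D3 ltac:(intros; apply Rmult_comm)).
assert (D5 := is_derive_plus (K:=R_AbsRing) (V:=R_NormedModule) _ _ t _ _ D1 D4).
replace (hd t) with (plus (t * (- t * phi t) + phi t + 2 * b0 * (- t * phi t))
   (plus (mult (2 * t + 2 * b0) (Phi t)) (mult (t * t + 2 * t * b0 - 1) (phi t)))).
2:{ unfold hd, plus, mult; simpl. unfold mult; simpl. ring. }
eapply is_derive_ext; [|exact D5].
intros u. unfold hh, plus, mult; simpl. unfold mult; simpl. ring.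
Qed.

Lemma hd_cont t : continuous hd t.
Proof.
apply (ex_derive_continuous (K:=R_AbsRing) (V:=R_NormedModule)).
unfold hd. 
assert (D3 : ex_derive Phi t).
{ exists (plus zero (phi t)). unfold Phi.
  apply (is_derive_plus (K:=R_AbsRing) (V:=R_NormedModule) (fun _ => 1/2) (fun t => RInt phi 0 t)).
  apply (is_derive_const (K:=R_AbsRing) (V:=R_NormedModule)). apply Phi0_deriv. }
apply (ex_derive_mult (fun t => 2 * (t + b0)) Phi). auto_derive; auto. exact D3.
Qed.

Lemma hh_mono z : - b0 <= z -> z <= 0 -> hh z <= hh 0.
Proof.
intros H1 H2.
assert (HI := is_RInt_derive (V:=R_CompleteNormedModule) hh hd z 0 (fun x _ => hh_deriv x) (fun x _ => hd_cont x)).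
apply is_RInt_unique in HI.
assert (Hp : 0 <= RInt hd z 0).
{ apply RInt_ge_0; auto. exists (minus (hh 0) (hh z)). 
  apply (is_RInt_derive (V:=R_CompleteNormedModule) hh hd z 0 (fun x _ => hh_deriv x) (fun x _ => hd_cont x)).
  intros x Hx. unfold hd. apply Rmult_le_pos. lra. unfold Phi. apply Phi_nonneg. lra. }
rewrite HI in Hp. unfold minus, plus, opp in Hp; simpl in Hp. lra.
Qed.

End Hmono.

Lemma alg nu p Q I x k b0 z phz r L :
  nu <> 0 -> L <> 0 -> p + Q = 1 -> k * ((z + b0) * (z + b0)) = 1 - nu ->
  1 - x * nu = k * (b0 * b0) * (1 + r / L) ->
  I = (1 - k * (1 + b0 * b0)) * Q - k * (z + 2 * b0) * phz ->
  p + (1 / nu) * I - x = (k / nu) * (b0 * b0 * r / L - (Q + z * z * p + 2 * z * b0 * p + z * phz + 2 * b0 * phz)).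
Proof.
intros Hnu HL HpQ H2 H3 HI. subst I.
apply (Rmult_eq_reg_l nu); [|auto].
replace (nu * (p + 1 / nu * ((1 - k * (1 + b0 * b0)) * Q - k * (z + 2 * b0) * phz) - x))
  with (nu * p + ((1 - k * (1 + b0 * b0)) * Q - k * (z + 2 * b0) * phz) - x * nu) by (field; auto).
replace (x * nu) with (1 - k * (b0 * b0) * (1 + r / L)) by lra.
replace (nu * p) with ((1 - k * ((z + b0) * (z + b0))) * p) by (rewrite H2; ring).
replace p with (1 - Q) by lra.
field. auto.
Qed.

Theorem lemma7 (M : nat) (snr a C' r x : R) :
  (2 <= M)%nat -> 0 < snr -> 0 <= a -> 0 < C' ->
  r > r1 M a ->
  0 <= x <= 1 -> x <= x_r M snr r ->
  forall p I : R,
    is_Phi (z_x M snr a C' (rate_of M a C' r) x) p ->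
    has_integral_from (glow_integrand M snr a C' (rate_of M a C' r) x)
      (z_x M snr a C' (rate_of M a C' r) x) I ->
    p + (1 / nu snr) * I - x >= gap M snr a r.
Proof.
intros HM Hsnr Ha HC Hr Hx Hxr p I Hp HI.
set (L := logM M) in *.
assert (HL : 0 < L).
{ unfold L, logM. rewrite <- ln_1. apply ln_increasing; [lra|].
  apply le_INR in HM. simpl in HM. lra. }
set (s := sqrt (2 * L)).
assert (Hs : 0 < s) by (apply sqrt_lt_R0; lra).
assert (Hss : s * s = 2 * L) by (apply sqrt_sqrt; lra).
set (d := delta_a M a).
assert (Hd : d = a / s) by reflexivity.
assert (Hd0 : 0 <= d) by (rewrite Hd; apply Rdiv_le_0_compat; lra).
set (b0 := s + a).
assert (Hb0 : b0 = s * (1 + d)) by (unfold b0; rewrite Hd; field; lra).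
assert (Hb0p : 0 < b0) by (unfold b0; lra).
assert (Hr1 : r1 M a = / (4 * ((1 + d) * (1 + d))) + sqrt L / (sqrt PI * (1 + d))).
{ unfold r1, r0. fold L. fold d. unfold Rsqr. field. split; [lra|].
  generalize sqrtPI_pos; lra. }
assert (Hr1p : 0 < r1 M a).
{ rewrite Hr1. assert (0 < sqrt L) by (apply sqrt_lt_R0; lra).
  assert (0 < / (4 * ((1 + d) * (1 + d)))) by (apply Rinv_0_lt_compat; nra).
  assert (0 < sqrt L / (sqrt PI * (1 + d))).
  { apply Rdiv_lt_0_compat; auto. generalize sqrtPI_pos; nra. }
  lra. }
set (Rt := rate_of M a C' r) in *.
assert (HRt : Rt = C' / ((1 + d) * (1 + d) * (1 + r / L))) by reflexivity.
assert (HrL : 0 < 1 + r / L) by (assert (0 < r / L) by (apply Rdiv_lt_0_compat; lra); lra).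
assert (HRtp : 0 < Rt) by (rewrite HRt; apply Rdiv_lt_0_compat; auto; nra).
set (nu0 := nu snr) in *.
assert (Hnu : nu0 = snr / (1 + snr)) by reflexivity.
assert (Hnu0 : 0 < nu0 < 1).
{ rewrite Hnu. split. apply Rdiv_lt_0_compat; lra.
  apply (Rmult_lt_reg_r (1 + snr)); [lra|]. unfold Rdiv. rewrite Rmult_assoc, Rinv_l by lra. lra. }
set (u := 1 - x * nu0).
assert (Hu : 0 < u) by (unfold u; nra).
assert (Hxr' : x <= 1 - 1 / snr * (r / L)) by exact Hxr.
assert (Hu2 : 1 + r / L <= u * (1 + snr)).
{ unfold u. rewrite Hnu. 
  replace ((1 - x * (snr / (1 + snr))) * (1 + snr)) with (1 + snr - x * snr) by (field; lra).
  assert (x * snr <= snr - r / L).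
  { replace (snr - r / L) with ((1 - 1 / snr * (r / L)) * snr) by (field; lra).
    apply Rmult_le_compat_r; lra. }
  lra. }
set (c := Rt / C' * u).
assert (Hc : c = u / ((1 + d) * (1 + d) * (1 + r / L))) by (unfold c; rewrite HRt; field; repeat split; lra).
set (k := c / (s * s)).
set (W := (1 - nu0) * C' / Rt / (1 - x * nu0)).
assert (HW : W = (1 + d) * (1 + d) * (1 + r / L) / ((1 + snr) * u)).
{ unfold W. fold u. rewrite HRt, Hnu. field. repeat split; try lra. }
assert (HW0 : 0 <= W) by (rewrite HW; apply Rdiv_le_0_compat; nra).
assert (HW1 : W <= (1 + d) * (1 + d)).
{ rewrite HW. apply (Rmult_le_reg_r ((1 + snr) * u)); [nra|].
  unfold Rdiv. rewrite Rmult_assoc, Rinv_l by nra. rewrite Rmult_1_r.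
  replace ((1 + d) * (1 + d) * ((1 + snr) * u)) with ((1 + d) * (1 + d) * (u * (1 + snr))) by ring.
  apply Rmult_le_compat_l; nra. }
set (w := sqrt W).
assert (Hw0 : 0 <= w) by apply sqrt_pos.
assert (Hww : w * w = W) by (apply sqrt_sqrt; auto).
assert (Hw1 : w <= 1 + d).
{ unfold w. rewrite <- (sqrt_square (1 + d)) by lra. apply sqrt_le_1_alt. exact HW1. }
set (z := z_x M snr a C' Rt x) in *.
assert (Hz : z = w * s - b0).
{ unfold z, z_x, mu. fold nu0. fold L. fold s. fold W. fold w. unfold b0. ring. }
assert (Hz1 : z <= 0) by (rewrite Hz, Hb0; nra).
assert (Hz2 : - b0 <= z) by (rewrite Hz; nra).
assert (F2 : k * ((z + b0) * (z + b0)) = 1 - nu0).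
{ rewrite Hz. replace (w * s - b0 + b0) with (w * s) by ring.
  unfold k, c. replace (Rt / C' * u / (s * s) * (w * s * (w * s))) with (Rt / C' * u * (w * w)) by (field; lra).
  rewrite Hww. unfold W. fold u. field. repeat split; lra. }
assert (F3 : 1 - x * nu0 = k * (b0 * b0) * (1 + r / L)).
{ fold u. unfold k. rewrite Hc, Hb0. field. repeat split; nra. }
assert (HI' := I_val c s a z I Hs HI).
assert (Hp' := Phi_val z p Hp).
set (P0 := RInt phi 0 z) in *.
assert (HpQ : p + (1/2 - P0) = 1) by lra.
assert (F4 : I = (1 - k * (1 + b0 * b0)) * (1/2 - P0) - k * (z + 2 * b0) * phi z).
{ rewrite HI'. unfold k, b0. ring. }
assert (Halg := alg nu0 p (1/2 - P0) I x k b0 z (phi z) r L ltac:(lra) ltac:(lra) HpQ F2 F3 F4).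
assert (Hh := hh_mono b0 z Hz2 Hz1). simpl in Hh. fold P0 in Hh.
assert (HR0 : RInt phi 0 0 = 0) by apply (RInt_point (V:=R_CompleteNormedModule)).
rewrite HR0 in Hh.
rewrite <- Hp' in Hh.
assert (Hphi0 : phi 0 = / sqrt (2 * PI)).
{ unfold phi. replace (- (0 * 0) / 2) with 0 by field. rewrite exp_0. field. generalize sqrt2PI_pos; lra. }
set (h := 1/2 - P0 + z * z * p + 2 * z * b0 * p + z * phi z + 2 * b0 * phi z).
assert (Hh2 : h <= 1/2 + 2 * b0 * phi 0) by (unfold h; lra).
assert (F6 : 1/2 + 2 * b0 * phi 0 = b0 * b0 * r1 M a / L).
{ rewrite Hr1, Hphi0, Hb0, sqrt2PI.
  assert (Hs2 : s = sqrt 2 * sqrt L) by (unfold s; apply sqrt_mult; lra).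
  assert (HsL : sqrt L * sqrt L = L) by (apply sqrt_sqrt; lra).
  assert (0 < sqrt L) by (apply sqrt_lt_R0; lra).
  assert (H22 : sqrt 2 * sqrt 2 = 2) by (apply sqrt_sqrt; lra).
  generalize sqrtPI_pos sqrt2_pos; intros.
  rewrite Hs2. set (q := sqrt L) in *. set (t := sqrt 2) in *. set (pp := sqrt PI) in *. rewrite <- HsL.
  replace (t * q * (1 + d) * (t * q * (1 + d))) with (2 * (q * q) * ((1 + d) * (1 + d))) by (rewrite <- H22; ring).
  field. repeat split; lra. }
assert (Hkb : k * (b0 * b0) = u / (1 + r / L)).
{ fold u in F3. rewrite F3. field. lra. }
assert (Hkp : 0 < k).
{ unfold k. apply Rdiv_lt_0_compat; [|nra]. rewrite Hc. apply Rdiv_lt_0_compat; auto. nra. }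
assert (HA : 0 < (r - r1 M a) / L) by (apply Rdiv_lt_0_compat; lra).
assert (Hq : 1 / snr <= k * (b0 * b0) / nu0).
{ rewrite Hkb, Hnu. apply (Rmult_le_reg_r (snr * (1 + r / L))); [nra|].
  replace (1 / snr * (snr * (1 + r / L))) with (1 + r / L) by (field; lra).
  replace (u / (1 + r / L) / (snr / (1 + snr)) * (snr * (1 + r / L))) with (u * (1 + snr)) by (field; repeat split; lra).
  exact Hu2. }
rewrite Halg. unfold gap. fold L. apply Rle_ge.
apply (Rle_trans _ (k * (b0 * b0) / nu0 * ((r - r1 M a) / L))).
- apply Rmult_le_compat_r; lra.
- fold h. replace (k * (b0 * b0) / nu0 * ((r - r1 M a) / L)) with (k / nu0 * (b0 * b0 * r / L - b0 * b0 * r1 M a / L)) by (field; lra).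
  apply Rmult_le_compat_l. apply Rdiv_le_0_compat; lra. lra.
Qed.
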